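(* For the OGD-CB algorithm (with any value sequence and any realization of competing bids), for every $t\le T_0+1$ we have $\lambda_t\in[0,\bar v/\rho-1]$.
   Context: Model: constants $\bar v>0$, $\rho\in(0,\bar v]$; $T$ rounds; budget $B=\rho T$. Round $t$: value $v_t\in[0,\bar v]$, highest competing bid $p_t\in[0,\bar v]$; buyer picks $x_t\in\{0,1\}$, pays $x_tc_t$ with $c_t=p_t\mathbf 1[v_t\ge p_t]$. Full information: $p_t$ observed every round; partial information: $p_t$ observed only when $x_t=1$. OGD-CB algorithm: $\mathcal I_1=\emptyset$, $B_1=B$, $\lambda_1=0$. For $t=1,\dots,T$: observe $v_t$. If $t=1$: $x_1=1$, $\lambda_2=\lambda_1$. Otherwise: $\epsilon_t=\sqrt{(\ln 2+2\ln T)/(2|\mathcal I_t|)}$; $\tilde r_t(v)=\frac1{|\mathcal I_t|}\sum_{\tau\in\mathcal I_t}(v-p_\tau)^++\epsilon_tv$; $\tilde c_t(v)=\frac1{|\mathcal I_t|}\sum_{\tau\in\mathcal I_t}p_\tau\mathbf 1[v\ge p_\tau]-2\epsilon_tv$; $x_t=\mathbf 1[\tilde r_t(v_t)\ge\lambda_t\tilde c_t(v_t)]$; $\eta_t=1/(\bar v\sqrt t)$; $\lambda_{t+1}=(\lambda_t+\eta_t(x_t\tilde c_t(v_t)-\rho))^+$. If (full information) or (partial information and $x_t=1$) observe $p_t$ and set $\mathcal I_{t+1}=\mathcal I_t\cup\{t\}$, else $\mathcal I_{t+1}=\mathcal I_t$. Set $B_{t+1}=B_t-x_tc_t$; if $B_{t+1}<\bar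 v$, stop. $T_0$ is the stopping round (or $T$). *)

(* Defs.v *)
From HB Require Import structures.
From mathcomp Require Import all_boot all_order all_algebra.
From mathcomp Require Import reals exp.
Set Implicit Arguments. Unset Strict Implicit. Unset Printing Implicit Defensive.
Import Order.TTheory GRing.Theory Num.Theory.
Local Open Scope ring_scope.

Section OGDCB.
Variables (R : realType) (vbar rho : R) (T : nat) (full : bool)
          (v p : nat -> R).

Definition pos (x : R) : R := Num.max 0 x.

Definition cost (t : nat) : R := if p t <= v t then p t else 0.

(* state at the beginning of a round: (I_t, B_t, lambda_t) *)
Definition state := (seq nat * R * R)%type.

Definition avg (I : seq nat) (f : nat -> R) : R :=
  (\sum_(tau <- I) f tau) / (size I)%:R.

Definition eps (I : seq nat) : R :=
  Num.sqrt ((ln 2 + 2 * ln (T%:R)) / (2 * (size I)%:R)).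

Definition rtilde (I : seq nat) (x : R) : R :=
  avg I (fun tau => pos (x - p tau)) + eps I * x.

Definition ctilde (I : seq nat) (x : R) : R :=
  avg I (fun tau => if p tau <= x then p tau else 0) - 2 * eps I * x.

Definition eta (t : nat) : R := (vbar * Num.sqrt (t%:R))^-1.

Definition decide (t : nat) (s : state) : bool :=
  let: (Is, _, lam) := s in
  if t == 1%N then true else lam * ctilde Is (v t) <= rtilde Is (v t).

(* one round t of OGD-CB (without the stopping rule) *)
Definition step (t : nat) (s : state) : state :=
  let: (Is, B, lam) := s in
  let x := decide t s in
  let lam' := if t == 1%N then lam
              else pos (lam + eta t * ((if x then ctilde Is (v t) else 0) - rho)) in
  let I' := if full || x then rcons Is t else Is in
  let B' := B - (if x then cost t else 0) in
  (I', B', lam').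

(* st t = state at the beginning of round t (for t >= 1); st 0 = st 1 = init *)
Fixpoint st (t : nat) : state :=
  match t with
  | 0 => ([::], rho * T%:R, 0)
  | t'.+1 => if t' == 0%N then ([::], rho * T%:R, 0) else step t' (st t')
  end.

Definition Ind (t : nat) : seq nat := (st t).1.1.
Definition Bud (t : nat) : R := (st t).1.2.
Definition lambda (t : nat) : R := (st t).2.

(* stopping round T_0: first t in 1..T with B_{t+1} < vbar, or T otherwise.
   Up to round T_0 the run with stopping coincides with st. *)
Definition T0 : nat := head T [seq t <- iota 1 T | Bud t.+1 < vbar].

End OGDCB.

(* Main.v *)
Require Import Defs.
From HB Require Import structures.
From mathcomp Require Import all_boot all_order all_algebra.
From mathcomp Require Import reals exp.
From mathcomp Require Import lra.
Import Order.TTheory GRing.Theory Num.Theory.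
Local Open Scope ring_scope.

Lemma key (R : realType) (vbar rho lam c r e : R) (x : bool) :
  0 < vbar -> 0 < rho -> rho <= vbar ->
  0 <= lam -> lam <= vbar / rho - 1 ->
  c <= vbar -> r + c <= vbar -> (x -> lam * c <= r) ->
  0 <= e -> e * vbar <= 1 ->
  0 <= pos (lam + e * ((if x then c else 0) - rho)) <= vbar / rho - 1.
Proof.
move=> v0 r0 rv l0 lM cv rcv xr e0 ev.
have M0 : 0 <= vbar / rho - 1.
  by rewrite subr_ge0 ler_pdivlMr // mul1r.
rewrite /pos le_max lexx /= ge_max M0 /=.
case: x xr => [/(_ isT) xr|_]; last first.
  have : 0 <= e * rho by apply: mulr_ge0 => //; lra.
  lra.
have [cr|cr] := lerP c rho.
  have : e * (c - rho) <= 0 by apply: mulr_ge0_le0 => //; lra.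
  lra.
rewrite lerBrDr ler_pdivlMr //.
have h1 : (lam + 1) * c <= vbar by nra.
have h2 : e * rho <= 1 by nra.
nra.
Qed.

Lemma sum_le (R : realType) (vbar : R) (I : seq nat) (f : nat -> R) :
  (forall t, f t <= vbar) -> \sum_(tau <- I) f tau <= (size I)%:R * vbar.
Proof.
move=> hf; elim: I => [|a I IH]; first by rewrite big_nil mul0r.
rewrite big_cons /= -addn1 natrD mulrDl mul1r addrC; exact: lerD.
Qed.

Lemma avg_le (R : realType) (vbar : R) (I : seq nat) (f : nat -> R) :
  0 <= vbar -> (forall t, f t <= vbar) -> avg I f <= vbar.
Proof.
move=> v0 hf; rewrite /avg.
case: I => [|a I]; first by rewrite big_nil mul0r.
rewrite ler_pdivrMr ?ltr0Sn // mulrC; exact: sum_le.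
Qed.

Lemma avgD (R : realType) (I : seq nat) (f g : nat -> R) :
  avg I f + avg I g = avg I (fun t => f t + g t).
Proof. by rewrite /avg big_split /= mulrDl. Qed.

Theorem lemma2 (R : realType) (vbar rho : R) (T : nat) (full : bool)
    (v p : nat -> R) :
  0 < vbar -> 0 < rho -> rho <= vbar ->
  (forall t, 0 <= v t <= vbar) -> (forall t, 0 <= p t <= vbar) ->
  forall t : nat, (1 <= t <= (T0 vbar rho T full v p).+1)%N ->
    0 <= lambda vbar rho T full v p t <= vbar / rho - 1.
Proof.
move=> v0 r0 rv hv hp t _.
have M0 : 0 <= vbar / rho - 1.
  by rewrite subr_ge0 ler_pdivlMr // mul1r.
elim: t => [|t IH]; first by rewrite /lambda /= lexx M0.
rewrite /lambda /=.
case: eqP => [_|/eqP t0]; first by rewrite /= lexx M0.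
move: IH; rewrite /lambda.
case: (st vbar rho T full v p t) => [[Is B] lam] /= IH.
case: eqP => [_|_] //=.
have [vt0 vtv] := andP (hv t).
have epsge : 0 <= eps R T Is by rewrite /eps; exact: sqrtr_ge0.
have cv : ctilde T p Is (v t) <= vbar.
  rewrite /ctilde; apply: le_trans (_ : avg Is (fun tau => if p tau <= v t then p tau else 0) <= vbar).
    rewrite lerBlDr lerDl; apply: mulr_ge0 => //; apply: mulr_ge0 => //.
  apply: avg_le; first exact: ltW.
  by move=> u; case: ifP => _; [case/andP: (hp u)|exact: ltW].
have rcv : rtilde T p Is (v t) + ctilde T p Is (v t) <= vbar.
  rewrite /rtilde /ctilde addrACA avgD.
  apply: le_trans (_ : avg Is (fun tau => if p tau <= v t then v t else 0) + 0 <= vbar).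
    apply: lerD.
      rewrite le_eqVlt; apply/orP; left; apply/eqP; rewrite /avg; congr (_ / _); apply: eq_bigr => u _.
      rewrite /pos; case: ifP => h.
        by rewrite max_r ?subr_ge0 // subrK.
      rewrite max_l ?addr0 //; move/negbT: h; rewrite -ltNge => h.
      by rewrite subr_le0 ltW.
    have : 0 <= eps R T Is * v t by apply: mulr_ge0.
    lra.
  rewrite addr0; apply: avg_le; first exact: ltW.
  by move=> u; case: ifP => _; last exact: ltW.
apply: (@key R vbar rho lam _ (rtilde T p Is (v t))) => //; try by case/andP: IH.
- rewrite /Defs.eta; rewrite invr_ge0; apply: mulr_ge0; [exact: ltW|exact: sqrtr_ge0].
- rewrite /Defs.eta.
  have s1 : 1 <= Num.sqrt (t%:R : R).
    by rewrite -{1}sqrtr1 ler_sqrt // ler1n lt0n t0.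
  have sp : 0 < Num.sqrt (t%:R : R) by apply: lt_le_trans s1.
  rewrite mulrC ler_pdivrMr ?mulr_gt0 // mul1r.
  by rewrite ler_peMr // ltW.
Qed.
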